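(* For each $0\ne a\in\mathbb{R}$, the translation operator $T_a:C^\infty(\mathbb{R},\mathbb{R})\to C^\infty(\mathbb{R},\mathbb{R})$, $T_a(f)(x)=f(x+a)$, is weakly mixing but does not support a hypercyclic algebra.
   Context: $C^\infty(\mathbb{R},\mathbb{R})$ is the Fréchet algebra (pointwise operations) of real-valued smooth functions on $\mathbb{R}$ with seminorms $p_k(f)=\max_{0\le j\le k}\max_{t\in[-k,k]}|f^{(j)}(t)|$. An operator $T$ is weakly mixing if $T\oplus T$ is topologically transitive (equivalently hypercyclic) on $X\times X$. $T$ supports a hypercyclic algebra if there is a subalgebra $A\ne\{0\}$ all of whose nonzero elements $f$ have dense orbit $\{T^nf:n\ge0\}$. *)

(* Defs.v *)
From Stdlib Require Import Reals.
From Coquelicot Require Import Coquelicot.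
Open Scope R_scope.

Definition smooth (f : R -> R) : Prop :=
  forall (n : nat) (x : R), ex_derive_n f n x.

(* Basic neighbourhood of f for the seminorm p_k:
   { g : p_k(g - f) < eps }, where
   p_k(h) = max_{0<=j<=k} max_{t in [-k,k]} |h^(j)(t)|.
   For smooth functions this max is attained (continuity on a compact),
   so p_k(g - f) < eps iff every term is < eps. *)
Definition pball (k : nat) (f : R -> R) (eps : R) (g : R -> R) : Prop :=
  forall (j : nat) (t : R), (j <= k)%nat -> - INR k <= t <= INR k ->
    Rabs (Derive_n g j t - Derive_n f j t) < eps.

Definition openX (U : (R -> R) -> Prop) : Prop :=
  forall f, smooth f -> U f ->
    exists (k : nat) (eps : R), 0 < eps /\
      forall g, smooth g -> pball k f eps g -> U g.

Definition nonemptyX (U : (R -> R) -> Prop) : Prop :=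
  exists f, smooth f /\ U f.

Definition openXX (W : (R -> R) * (R -> R) -> Prop) : Prop :=
  forall f1 f2, smooth f1 -> smooth f2 -> W (f1, f2) ->
    exists (k : nat) (eps : R), 0 < eps /\
      forall g1 g2, smooth g1 -> smooth g2 ->
        pball k f1 eps g1 -> pball k f2 eps g2 -> W (g1, g2).

Definition nonemptyXX (W : (R -> R) * (R -> R) -> Prop) : Prop :=
  exists f1 f2, smooth f1 /\ smooth f2 /\ W (f1, f2).

Definition transl (a : R) (f : R -> R) : R -> R := fun x => f (x + a).

(* Weak mixing: T (+) T is topologically transitive on X x X. *)
Definition weakly_mixing (T : (R -> R) -> (R -> R)) : Prop :=
  forall W1 W2, openXX W1 -> nonemptyXX W1 -> openXX W2 -> nonemptyXX W2 ->
    exists (n : nat) f1 f2, smooth f1 /\ smooth f2 /\ W1 (f1, f2) /\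
      W2 (Nat.iter n T f1, Nat.iter n T f2).

Definition dense_orbit (T : (R -> R) -> (R -> R)) (f : R -> R) : Prop :=
  forall U, openX U -> nonemptyX U -> exists n : nat, U (Nat.iter n T f).

Definition subalgebra (A : (R -> R) -> Prop) : Prop :=
  (forall f, A f -> smooth f) /\
  A (fun _ => 0) /\
  (forall f g, A f -> A g -> A (fun x => f x + g x)) /\
  (forall (c : R) f, A f -> A (fun x => c * f x)) /\
  (forall f g, A f -> A g -> A (fun x => f x * g x)).

Definition supports_hypercyclic_algebra (T : (R -> R) -> (R -> R)) : Prop :=
  exists A, subalgebra A /\ (exists f, A f /\ f <> (fun _ => 0)) /\
    forall f, A f -> f <> (fun _ => 0) -> dense_orbit T f.

(* Main.v *)
Require Import Defs.
From Stdlib Require Import Reals Lra Lia Psatz FunctionalExtensionality Classical.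
From Coquelicot Require Import Coquelicot.
Open Scope R_scope.

Lemma d_mult f g x df dg : is_derive f x df -> is_derive g x dg ->
  is_derive (fun t => f t * g t) x (df * g x + f x * dg).
Proof. intros H1 H2. apply (is_derive_mult f g x df dg H1 H2). intros; apply Rmult_comm. Qed.

Lemma d_plus f g x df dg : is_derive f x df -> is_derive g x dg ->
  is_derive (fun t => f t + g t) x (df + dg).
Proof. intros H1 H2. apply (is_derive_plus f g x df dg H1 H2). Qed.

Lemma d_comp f u x df du : is_derive f (u x) df -> is_derive u x du ->
  is_derive (fun t => f (u t)) x (df * du).
Proof. intros H1 H2. rewrite Rmult_comm. apply (is_derive_comp f u x df du H1 H2). Qed.

Lemma d_const (c x : R) : is_derive (fun _ => c) x 0.
Proof. apply (is_derive_const c x). Qed.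

Lemma d_id (x : R) : is_derive (fun t => t) x 1.
Proof. apply (is_derive_id x). Qed.

Fixpoint Ck (n : nat) (f : R -> R) : Prop :=
  match n with O => True | S m => (forall x, ex_derive f x) /\ Ck m (Derive f) end.

Definition Sm f := forall n, Ck n f.

Lemma Ck_le n f : Ck (S n) f -> Ck n f.
Proof.
  revert f; induction n; intros f H; simpl in *; auto.
  destruct H as [H1 H2]. split; auto.
Qed.

Lemma Ck_plus n : forall f g, Ck n f -> Ck n g -> Ck n (fun x => f x + g x).
Proof.
  induction n; intros f g Hf Hg; simpl in *; auto.
  destruct Hf as [F1 F2], Hg as [G1 G2]. split.
  - intros x. destruct (F1 x) as [a Ha]; destruct (G1 x) as [b Hb]. eexists. apply d_plus; eauto.
  - replace (Derive (fun x => f x + g x)) with (fun x => Derive f x + Derive g x).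
    + apply IHn; auto.
    + apply functional_extensionality; intros x. rewrite Derive_plus; auto.
Qed.

Lemma Ck_mult n : forall f g, Ck n f -> Ck n g -> Ck n (fun x => f x * g x).
Proof.
  induction n; intros f g Hf Hg; simpl in *; auto.
  pose proof (Ck_le n f) as Lf. pose proof (Ck_le n g) as Lg. simpl in Lf, Lg.
  specialize (Lf Hf). specialize (Lg Hg).
  destruct Hf as [F1 F2], Hg as [G1 G2]. split.
  - intros x. destruct (F1 x) as [a Ha]; destruct (G1 x) as [b Hb]. eexists. apply d_mult; eauto.
  - replace (Derive (fun x => f x * g x)) with (fun x => Derive f x * g x + f x * Derive g x).
    + apply Ck_plus; apply IHn; auto.
    + apply functional_extensionality; intros x. rewrite Derive_mult; auto.
Qed.

Lemma Ck_const n c : Ck n (fun _ => c).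
Proof.
  revert c; induction n; intros c; simpl; auto. split.
  - intros x. eexists. apply d_const.
  - replace (Derive (fun _ => c)) with (fun _ : R => 0). apply IHn.
    apply functional_extensionality; intros x. symmetry. apply is_derive_unique, d_const.
Qed.

Lemma Ck_id n : Ck n (fun x => x).
Proof.
  destruct n; simpl; auto. split.
  - intros x. eexists. apply d_id.
  - replace (Derive (fun x => x)) with (fun _ : R => 1). apply Ck_const.
    apply functional_extensionality; intros x. symmetry. apply is_derive_unique, d_id.
Qed.

Lemma Ck_comp n : forall f u, Ck n f -> Ck n u -> Ck n (fun x => f (u x)).
Proof.
  induction n; intros f u Hf Hu; simpl in *; auto.
  pose proof (Ck_le n u) as Lu. simpl in Lu. specialize (Lu Hu).
  destruct Hf as [F1 F2], Hu as [U1 U2]. split.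
  - intros x. destruct (F1 (u x)) as [df Hdf]. destruct (U1 x) as [du Hdu].
    eexists. apply d_comp; eauto.
  - replace (Derive (fun x => f (u x))) with (fun x => Derive f (u x) * Derive u x).
    + apply Ck_mult; auto.
    + apply functional_extensionality; intros x. symmetry. apply is_derive_unique.
      apply d_comp; apply Derive_correct; auto.
Qed.

Lemma Ck_inv n : forall u, Ck n u -> (forall x, u x <> 0) -> Ck n (fun x => / u x).
Proof.
  induction n; intros u Hu Hnz; simpl in *; auto.
  pose proof (Ck_le n u) as Lu. simpl in Lu. specialize (Lu Hu).
  destruct Hu as [U1 U2]. split.
  - intros x. eexists. apply is_derive_inv; auto. apply Derive_correct; auto.
  - replace (Derive (fun x => / u x)) with (fun x => (-1) * Derive u x * (/ u x * / u x)).
    + apply Ck_mult. apply Ck_mult; auto. apply Ck_const.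
      apply Ck_mult; apply IHn; auto.
    + apply functional_extensionality; intros x. symmetry. apply is_derive_unique.
      replace ((-1) * Derive u x * (/ u x * / u x)) with (- Derive u x / u x ^ 2).
      apply is_derive_inv; auto. apply Derive_correct; auto.
      specialize (Hnz x). field. auto.
Qed.

Lemma Sm_smooth f : Sm f -> smooth f.
Proof.
  intros H n. assert (K : forall m g, Ck (S m) g -> forall x, ex_derive (Derive_n g m) x).
  { induction m; intros g Hg x; simpl in Hg.
    - destruct Hg; auto.
    - destruct Hg as [G1 G2].
      replace (Derive_n g (S m)) with (Derive_n (Derive g) m).
      apply IHm; auto.
      apply functional_extensionality; intros y.
      replace (S m) with (m+1)%nat by lia. rewrite <- Derive_n_comp. try reflexivity. }
  intros x. destruct n; simpl; [exact I|]. apply K. apply H.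
Qed.

Lemma smooth_Sm f : smooth f -> Sm f.
Proof.
  intros H n. revert f H; induction n; intros f H; simpl; auto. split.
  - intros x. exact (H 1%nat x).
  - apply IHn. intros m x. destruct m; simpl; auto.
    replace (Derive_n (Derive f) m) with (Derive_n f (S m)).
    exact (H (S (S m)) x).
    apply functional_extensionality; intros y.
    replace (S m) with (m+1)%nat by lia. rewrite <- Derive_n_comp. try reflexivity.
Qed.

Lemma exp_pow_n (z : R) (m : nat) : exp (INR m * z) = exp z ^ m.
Proof.
  induction m. simpl. rewrite Rmult_0_l, exp_0. auto.
  rewrite S_INR. replace ((INR m + 1) * z) with (INR m * z + z) by ring.
  rewrite exp_plus, IHm. simpl. ring.
Qed.

Lemma key_est (N : nat) (y : R) : 0 < y -> y ^ N * exp (- y) <= INR (S N) ^ (S N) / y.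
Proof.
  intros Hy. set (M := INR (S N)).
  assert (HM : 0 < M) by (apply lt_0_INR; lia).
  assert (E : (y / M) ^ (S N) <= exp y).
  { assert (Ey : exp y = exp (INR (S N) * (y / M))) by (f_equal; fold M; field; lra).
    rewrite Ey, exp_pow_n. fold M. apply pow_incr. split. apply Rlt_le, Rdiv_lt_0_compat; lra.
    destruct (Req_dec (y/M) 0) as [Z|Z]. rewrite Z, exp_0; lra.
    pose proof (exp_ineq1 (y/M) Z). lra. }
  unfold Rdiv in E. rewrite Rpow_mult_distr in E. rewrite pow_inv in E.
  assert (Hp : 0 < M ^ S N) by (apply pow_lt; lra).
  assert (Hyn : 0 < y ^ N) by (apply pow_lt; lra).
  rewrite exp_Ropp.
  assert (He : 0 < exp y) by apply exp_pos.
  apply (Rmult_le_reg_r (y * exp y)). nra.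
  replace (y ^ N * / exp y * (y * exp y)) with (y ^ S N) by (simpl; field; lra).
  replace (M ^ S N / y * (y * exp y)) with (M ^ S N * exp y) by (field; lra).
  apply (Rmult_le_reg_r (/ M ^ S N)). apply Rinv_0_lt_compat; lra.
  replace (M ^ S N * exp y * / M ^ S N) with (exp y) by (field; lra). lra.
Qed.

Inductive IsPoly : (R -> R) -> Prop :=
| P_const c : IsPoly (fun _ => c)
| P_id : IsPoly (fun y => y)
| P_plus P Q : IsPoly P -> IsPoly Q -> IsPoly (fun y => P y + Q y)
| P_mult P Q : IsPoly P -> IsPoly Q -> IsPoly (fun y => P y * Q y).

Lemma poly_deriv P : IsPoly P -> exists P', IsPoly P' /\ forall y, is_derive P y (P' y).
Proof.
  induction 1.
  - exists (fun _ => 0). split. constructor. intros; apply d_const.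
  - exists (fun _ => 1). split. constructor. intros; apply d_id.
  - destruct IHIsPoly1 as [P' [H1 D1]], IHIsPoly2 as [Q' [H2 D2]].
    exists (fun y => P' y + Q' y). split. constructor; auto. intros; apply d_plus; auto.
  - destruct IHIsPoly1 as [P' [H1 D1]], IHIsPoly2 as [Q' [H2 D2]].
    exists (fun y => P' y * Q y + P y * Q' y). split. repeat constructor; auto.
    intros; apply d_mult; auto.
Qed.

Lemma poly_bound P : IsPoly P -> exists C N, 0 <= C /\ forall y, 1 <= y -> Rabs (P y) <= C * y ^ N.
Proof.
  induction 1.
  - exists (Rabs c), 0%nat. split. apply Rabs_pos. intros; simpl; lra.
  - exists 1, 1%nat. split. lra. intros; simpl. rewrite Rabs_right; lra.
  - destruct IHIsPoly1 as [C1 [N1 [HC1 B1]]], IHIsPoly2 as [C2 [N2 [HC2 B2]]].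
    exists (C1 + C2), (Nat.max N1 N2). split. lra. intros y Hy.
    pose proof (B1 y Hy). pose proof (B2 y Hy).
    pose proof (Rle_pow y N1 (Nat.max N1 N2) Hy (Nat.le_max_l _ _)).
    pose proof (Rle_pow y N2 (Nat.max N1 N2) Hy (Nat.le_max_r _ _)).
    pose proof (Rabs_triang (P y) (Q y)).
    assert (C1 * y ^ N1 <= C1 * y ^ Nat.max N1 N2) by (apply Rmult_le_compat_l; auto).
    assert (C2 * y ^ N2 <= C2 * y ^ Nat.max N1 N2) by (apply Rmult_le_compat_l; auto).
    lra.
  - destruct IHIsPoly1 as [C1 [N1 [HC1 B1]]], IHIsPoly2 as [C2 [N2 [HC2 B2]]].
    exists (C1 * C2), (N1 + N2)%nat. split. nra. intros y Hy.
    rewrite Rabs_mult, pow_add.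
    replace (C1 * C2 * (y ^ N1 * y ^ N2)) with ((C1 * y ^ N1) * (C2 * y ^ N2)) by ring.
    apply Rmult_le_compat; auto; apply Rabs_pos.
Qed.

Definition FP (P : R -> R) (x : R) : R :=
  if Rlt_dec 0 x then P (/ x) * exp (- / x) else 0.

Lemma FP_deriv0 P : IsPoly P -> is_derive (FP P) 0 0.
Proof.
  intros HP. destruct (poly_bound P HP) as [C [N [HC B]]].
  apply is_derive_Reals. intros eps Heps.
  set (K := INR (S (S N)) ^ (S (S N))).
  assert (HK : 0 < K) by (apply pow_lt, lt_0_INR; lia).
  assert (Hd : 0 < Rmin 1 (eps / (C * K + 1))).
  { apply Rmin_pos. lra. apply Rdiv_lt_0_compat; nra. }
  exists (mkposreal _ Hd). intros h Hh Hhd. simpl in Hhd.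
  unfold FP. rewrite Rplus_0_l.
  destruct (Rlt_dec 0 0) as [Z|_]; [lra|].
  destruct (Rlt_dec 0 h) as [Hp|Hn].
  2:{ replace ((0 - 0) / h - 0) with 0 by (field; auto). rewrite Rabs_R0; auto. }
  rewrite Rabs_right in Hhd by lra.
  pose proof (Rmin_l 1 (eps / (C * K + 1))). pose proof (Rmin_r 1 (eps / (C * K + 1))).
  set (y := / h).
  assert (Hy : 1 <= y). { unfold y. rewrite <- Rinv_1. apply Rinv_le_contravar; lra. }
  pose proof (B y Hy) as By.
  pose proof (key_est (S N) y ltac:(lra)) as Ke. fold K in Ke.
  replace ((P y * exp (- y) - 0) / h - 0) with (P y * y * exp (- y)) by (unfold y; field; lra).
  rewrite Rabs_mult, Rabs_mult. rewrite (Rabs_right (exp _)) by (left; apply exp_pos).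
  rewrite (Rabs_right y) by lra.
  assert (Hey : 0 < exp (- y)) by apply exp_pos.
  assert (S1 : Rabs (P y) * y * exp (- y) <= C * (y ^ S N * exp (- y))).
  { simpl. assert (0 <= y * exp (-y)) by nra.
    replace (C * (y * y ^ N * exp (- y))) with (C * y ^ N * (y * exp (- y))) by ring.
    replace (Rabs (P y) * y * exp (- y)) with (Rabs (P y) * (y * exp (- y))) by ring.
    apply Rmult_le_compat_r; auto. }
  assert (S2 : C * (y ^ S N * exp (- y)) <= C * (K / y)) by (apply Rmult_le_compat_l; auto).
  assert (S3 : C * (K / y) = C * K * h) by (unfold y; field; lra).
  assert (S4 : C * K * h < eps).
  { assert (h < eps / (C * K + 1)) by lra.
    apply (Rmult_lt_compat_l (C*K+1)) in H1; [|nra].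
    replace ((C * K + 1) * (eps / (C * K + 1))) with eps in H1 by (field; nra). nra. }
  lra.
Qed.

Lemma loc_R x (Pr : R -> Prop) (e : R) : 0 < e -> (forall t, Rabs (t - x) < e -> Pr t) -> locally x Pr.
Proof. intros He H. exists (mkposreal e He). intros t Ht. apply H. exact Ht. Qed.

Lemma d_opp (f : R -> R) (x df : R) : is_derive f x df -> is_derive (fun t => - f t) x (- df).
Proof. intros H. apply (is_derive_opp f x df H). Qed.

Lemma d_ext (f g : R -> R) (x l l' : R) : (forall t, f t = g t) -> l = l' -> is_derive f x l -> is_derive g x l'.
Proof. intros H1 H2 H. subst. apply (is_derive_ext f g x l' H1 H). Qed.

Lemma FP_deriv P : IsPoly P -> exists Q, IsPoly Q /\ forall x, is_derive (FP P) x (FP Q x).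
Proof.
  intros HP. destruct (poly_deriv P HP) as [P' [HP' DP]].
  exists (fun y => y * y * (P y + (-1) * P' y)). split.
  { repeat constructor; auto. }
  intros x. destruct (Rtotal_order x 0) as [Hn|[Hz|Hp]].
  - apply (is_derive_ext_loc (fun _ => 0)).
    + apply (loc_R x _ (- x)). lra. intros t Ht. unfold FP.
      destruct (Rlt_dec 0 t); auto. apply Rabs_def2 in Ht. lra.
    + unfold FP. destruct (Rlt_dec 0 x); [lra|]. apply d_const.
  - subst x. unfold FP at 2. destruct (Rlt_dec 0 0); [lra|]. apply FP_deriv0; auto.
  - apply (is_derive_ext_loc (fun t => P (/ t) * exp (- / t))).
    + apply (loc_R x _ x). lra. intros t Ht. unfold FP.
      destruct (Rlt_dec 0 t); auto. apply Rabs_def2 in Ht. lra.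
    + assert (Dinv : is_derive (fun t => / t) x (- 1 / x ^ 2)).
      { apply (is_derive_inv (fun t => t) x 1). apply d_id. lra. }
      assert (D1 := d_comp P (fun t => / t) x _ _ (DP (/ x)) Dinv).
      assert (D2 := d_comp exp (fun t => - / t) x _ _ (is_derive_exp (- / x)) (d_opp _ _ _ Dinv)).
      assert (D3 := d_mult _ _ x _ _ D1 D2). simpl in D3.
      eapply d_ext; [ | | exact D3]. intros; reflexivity.
      unfold FP. destruct (Rlt_dec 0 x); [|lra]. field. lra.
Qed.

Lemma FP_Ck n : forall P, IsPoly P -> Ck n (FP P).
Proof.
  induction n; intros P HP; simpl; auto.
  destruct (FP_deriv P HP) as [Q [HQ DQ]]. split.
  - intros x. eexists. apply DQ.
  - replace (Derive (FP P)) with (FP Q). apply IHn; auto.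
    apply functional_extensionality; intros x. symmetry. apply is_derive_unique, DQ.
Qed.

Definition psi := FP (fun _ => 1).

Lemma psi_Sm : Sm psi.
Proof. intros n. apply FP_Ck. constructor. Qed.

Lemma psi_0 x : x <= 0 -> psi x = 0.
Proof. intros H. unfold psi, FP. destruct (Rlt_dec 0 x); auto; lra. Qed.

Lemma psi_pos x : 0 < x -> 0 < psi x.
Proof. intros H. unfold psi, FP. destruct (Rlt_dec 0 x); [|lra]. rewrite Rmult_1_l. apply exp_pos. Qed.

Lemma psi_ge0 x : 0 <= psi x.
Proof. destruct (Rle_lt_dec x 0). rewrite psi_0; lra. left; apply psi_pos; auto. Qed.

Definition sigm (x : R) : R := psi x * / (psi x + psi (1 - x)).

Lemma Ck_ext n (f g : R -> R) : (forall x, f x = g x) -> Ck n f -> Ck n g.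
Proof. intros H. replace g with f; auto. apply functional_extensionality; auto. Qed.

Lemma Ck_affine n (al be : R) : Ck n (fun x => al * x + be).
Proof. apply (Ck_plus n (fun x => al * x) (fun _ => be)). apply (Ck_mult n (fun _ => al) (fun x => x)).
  apply Ck_const. apply Ck_id. apply Ck_const. Qed.

Lemma sigma_Sm : Sm sigm.
Proof.
  intros n. unfold sigm. apply Ck_mult. apply psi_Sm.
  apply Ck_inv. apply Ck_plus. apply psi_Sm.
  apply (Ck_comp n psi (fun x => 1 - x)). apply psi_Sm.
  apply (Ck_ext n (fun x => (-1) * x + 1)). intros; ring. apply Ck_affine.
  intros x. destruct (Rle_lt_dec x 0).
  - pose proof (psi_pos (1 - x) ltac:(lra)). pose proof (psi_ge0 x). lra.
  - pose proof (psi_pos x ltac:(lra)). pose proof (psi_ge0 (1 - x)). lra.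
Qed.

Lemma sigma_0 x : x <= 0 -> sigm x = 0.
Proof. intros H. unfold sigm. rewrite psi_0; auto. ring. Qed.

Lemma sigma_1 x : 1 <= x -> sigm x = 1.
Proof. intros H. unfold sigm. rewrite (psi_0 (1 - x)) by lra. pose proof (psi_pos x ltac:(lra)).
  field. lra. Qed.

Lemma glue (K L : R) (g h : R -> R) : 0 <= K -> 2 * K + 3 <= Rabs L -> Sm g -> Sm h ->
  exists f, Sm f /\ (forall t, Rabs t < K + 1 -> f t = g t) /\
    (forall t, Rabs t < K + 1 -> f (t + L) = h t).
Proof.
  intros HK HL Sg Sh.
  set (D := (Rabs L - K - 1) ^ 2 - (K + 1) ^ 2).
  assert (HD : 0 < D). { unfold D. nra. }
  set (beta := fun x => sigm ((x * x - (K + 1) ^ 2) / D)).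
  exists (fun x => g x + (h (x - L) - g x) * beta x). split; [|split].
  - intros n. apply Ck_plus. apply Sg. apply Ck_mult.
    + apply (Ck_ext n (fun x => h (x - L) + -1 * g x)). intros; ring.
      apply (Ck_plus n (fun x => h (x - L)) (fun x => -1 * g x)).
      * apply (Ck_comp n h (fun x => x - L)). apply Sh.
        apply (Ck_ext n (fun x => 1 * x + - L)). intros; ring. apply Ck_affine.
      * apply (Ck_mult n (fun _ => -1) g). apply Ck_const. apply Sg.
    + unfold beta. apply (Ck_comp n sigm (fun x => (x * x - (K + 1) ^ 2) / D)).
      apply sigma_Sm.
      apply (Ck_ext n (fun x => (/ D) * (x * x) + (- (K + 1) ^ 2 / D))).
      intros; field; lra.
      apply Ck_plus. apply Ck_mult. apply Ck_const. apply Ck_mult; apply Ck_id. apply Ck_const.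
  - intros t Ht. unfold beta. rewrite sigma_0. ring.
    apply Rabs_def2 in Ht. unfold Rdiv. apply Rmult_le_0_r.
    nra. left; apply Rinv_0_lt_compat; auto.
  - intros t Ht. unfold beta. rewrite sigma_1.
    replace (t + L - L) with t by ring. ring.
    apply (Rmult_le_reg_r D); auto. unfold Rdiv. rewrite Rmult_assoc, Rinv_l by lra.
    rewrite Rmult_1_l, Rmult_1_r. unfold D.
    apply Rabs_def2 in Ht.
    destruct (Rle_lt_dec 0 L) as [HL0|HL0].
    + rewrite Rabs_right in * by lra. nra.
    + rewrite Rabs_left in * by lra. nra.
Qed.

Lemma pball_eq k (f g : R -> R) eps K : 0 < eps -> INR k <= K ->
  (forall t, Rabs t < K + 1 -> g t = f t) -> pball k f eps g.
Proof.
  intros He Hk H j t _ Ht.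
  rewrite (Derive_n_ext_loc g f j t). unfold Rminus. rewrite Rplus_opp_r, Rabs_R0; auto.
  apply (loc_R t _ 1). lra. intros s Hs. apply H.
  apply Rabs_def2 in Hs. apply Rabs_def1; lra.
Qed.

Lemma iter_transl a n f : Nat.iter n (transl a) f = fun x => f (x + INR n * a).
Proof.
  induction n.
  - simpl. apply functional_extensionality; intros x. f_equal. ring.
  - change (Nat.iter (S n) (transl a) f) with (transl a (Nat.iter n (transl a) f)).
    rewrite IHn. unfold transl. apply functional_extensionality; intros x. f_equal.
    rewrite S_INR. ring.
Qed.

Lemma Sm_shift f c : Sm f -> Sm (fun x => f (x + c)).
Proof.
  intros H n. apply (Ck_comp n f (fun x => x + c)). apply H.
  apply (Ck_ext n (fun x => 1 * x + c)). intros; ring. apply Ck_affine.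
Qed.

Lemma part1 (a : R) (ha : a <> 0) : weakly_mixing (transl a).
Proof.
  intros W1 W2 O1 [g1 [g2 [Sg1 [Sg2 Wg]]]] O2 [h1 [h2 [Sh1 [Sh2 Wh]]]].
  destruct (O1 g1 g2 Sg1 Sg2 Wg) as [k1 [e1 [He1 P1]]].
  destruct (O2 h1 h2 Sh1 Sh2 Wh) as [k2 [e2 [He2 P2]]].
  set (K := INR k1 + INR k2).
  assert (HK1 : 0 <= INR k1) by apply pos_INR.
  assert (HK2 : 0 <= INR k2) by apply pos_INR.
  assert (Ha : 0 < Rabs a) by (apply Rabs_pos_lt; auto).
  destruct (INR_archimed (Rabs a) (2 * K + 3) Ha) as [n Hn].
  set (L := INR n * a).
  assert (HL : 2 * K + 3 <= Rabs L).
  { unfold L. rewrite Rabs_mult, (Rabs_right (INR n)) by (apply Rle_ge, pos_INR). lra. }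
  destruct (glue K L g1 h1 ltac:(unfold K; lra) HL (smooth_Sm _ Sg1) (smooth_Sm _ Sh1)) as [f1 [S1 [A1 B1]]].
  destruct (glue K L g2 h2 ltac:(unfold K; lra) HL (smooth_Sm _ Sg2) (smooth_Sm _ Sh2)) as [f2 [S2 [A2 B2]]].
  exists n, f1, f2. split; [apply Sm_smooth; auto|]. split; [apply Sm_smooth; auto|]. split.
  - apply P1; try (apply Sm_smooth; auto); apply (pball_eq _ _ _ _ K); auto; unfold K; lra.
  - rewrite !iter_transl. fold L.
    apply P2; try (apply Sm_smooth, Sm_shift; auto); apply (pball_eq _ _ _ _ K); auto; unfold K; lra.
Qed.

Lemma part2 (a : R) : ~ supports_hypercyclic_algebra (transl a).
Proof.
  intros [A [[Asm [A0 [Aadd [Asc Amul]]]] [[f [Af Hf]] Hd]]].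
  assert (Hx : exists x, f x <> 0).
  { apply NNPP. intros Hn. apply Hf. apply functional_extensionality. intros x.
    apply NNPP. intros Hx. apply Hn. exists x. auto. }
  destruct Hx as [x0 Hx0].
  assert (Af2 := Amul f f Af Af).
  assert (Hnz : (fun x => f x * f x) <> (fun _ => 0)).
  { intros E. apply Hx0. pose proof (f_equal (fun F => F x0) E) as E'. simpl in E'. nra. }
  destruct (Hd _ Af2 Hnz (fun g => g 0 < -1)) as [n Hn].
  - intros g Sg Hg. exists 0%nat, (-1 - g 0). split. lra.
    intros h Sh Hb. specialize (Hb 0%nat 0 (le_n 0) ltac:(simpl; lra)). simpl in Hb.
    apply Rabs_def2 in Hb. lra.
  - exists (fun _ => -2). split. apply Sm_smooth. intros m; apply Ck_const. lra.
  - rewrite iter_transl in Hn. simpl in Hn. nra.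
Qed.

Theorem corollary17 (a : R) (ha : a <> 0) :
  weakly_mixing (transl a) /\ ~ supports_hypercyclic_algebra (transl a).
Proof. split. apply part1; auto. apply part2. Qed.
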